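(* Let $(e,h,A),(e',h',A'),(e'',h'',A'')\in\mathcal D_{g,n}$. There exist a graph $\Gamma\in G_{g,n}$ and sets $W,W',W''\in\mathcal C(\Gamma)$ with $W=W'\sqcup W''$ (disjoint union) and $(\mathrm{val}(W),g(W),A(W))=(e,h,A)$, $(\mathrm{val}(W'),g(W'),A(W'))=(e',h',A')$, $(\mathrm{val}(W''),g(W''),A(W''))=(e'',h'',A'')$ if and only if $A=A'\sqcup A''$, $2(h+1-(h'+h''))=e'+e''-e$, and there is a nondegenerate triangle with side lengths $e,e',e''$ (i.e. $e<e'+e''$, $e'<e+e''$, $e''<e+e'$).
   Context: Fix integers $g,n\ge0$ with $2g-2+n>0$, $[n]=\{1,\dots,n\}$. A stable graph of type $(g,n)$ is a finite connected multigraph $\Gamma$ (loops allowed) with genus function $g:V(\Gamma)\to\mathbb Z_{\ge0}$ and markings $A(v)\subseteq[n]$ partitioning $[n]$, such that $|E(\Gamma)|-|V(\Gamma)|+1+\sum_v g(v)=g$ and $2g(v)-2+\mathrm{val}(v)+|A(v)|>0$ for all $v$. $G_{g,n}$ is the set (category) of representatives of isomorphism classes of such graphs. For $W\subseteq V(\Gamma)$: $W^{\mathsf c}=V(\Gamma)\setminus W$, $\mathrm{val}(W)$ = number of edges between $W$ and $W^{\mathsf c}$, $g(W)=|E(\Gamma[W])|-|W|+1+\sum_{v\in W}g(v)$ with $\Gamma[W]$ the induced subgraph, $A(W)=\bigcup_{v\in W}A(v)$. $W$ is nontrivial biconnected if $\emptyset\ne W\ne V(\Gamma)$ and $\Gamma[W],\Gamma[W^{\mathsf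 c}]$ are connected; $\mathcal C(\Gamma)$ is the set of these. The vine graph $V(e,h,A)$ has two vertices $v_1,v_2$ joined by $e$ edges, no loops, $g(v_1)=h$, $A(v_1)=A$, $g(v_2)=g+1-e-h$, $A(v_2)=[n]\setminus A$. $\mathcal D_{g,n}$ is the set of triples $(e,h,A)$ with $e\ge1$, $h\ge0$, $g+1-e-h\ge0$, $A\subseteq[n]$, such that $V(e,h,A)$ is stable. *)

(* Defs.v *)
From mathcomp Require Import all_boot all_order all_algebra.
Set Implicit Arguments. Unset Strict Implicit. Unset Printing Implicit Defensive.

(* A (multi)graph with legs: vertices 'I_nv, edges 'I_ne (each edge has an
   unordered pair of endpoints, loops allowed), genus function, and markings
   given by the map sending each marked point j of [n] (encoded as 'I_n) to
   the vertex v with j \in A(v); thus the A(v) partition [n]. *)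
Record sgraph (n : nat) := SGraph {
  nv : nat;
  ne : nat;
  ends : 'I_ne -> 'I_nv * 'I_nv;
  gv : 'I_nv -> nat;
  mark : 'I_n -> 'I_nv }.

Arguments nv {n} s.
Arguments ne {n} s.
Arguments ends {n} s _.
Arguments gv {n} s _.
Arguments mark {n} s _.

Section Graphs.
Variable n : nat.
Variable G : sgraph n.

Definition V := 'I_(nv G).

(* val(v): number of half-edges at v (a loop contributes 2) *)
Definition valv (v : V) : nat :=
  \sum_(i : 'I_(ne G)) (((ends G i).1 == v) + ((ends G i).2 == v)).

Definition Av (v : V) : {set 'I_n} := [set j | mark G j == v].

Definition adjW (W : {set V}) : rel V := fun x y =>
  [&& x \in W, y \in W &
      [exists i : 'I_(ne G), (ends G i == (x, y)) || (ends G i == (y, x))]].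

Definition induced_connected (W : {set V}) : Prop :=
  forall x y, x \in W -> y \in W -> connect (adjW W) x y.

Definition connected_graph : Prop := induced_connected setT.

Definition is_stable (g : nat) : Prop :=
  [/\ connected_graph,
      ne G + 1 + \sum_(v : V) gv G v = g + nv G
      (* i.e. |E| - |V| + 1 + sum_v g(v) = g *)
    & forall v : V, 2 < 2 * gv G v + valv v + #|Av v| ].

Definition edgesW (W : {set V}) : nat :=
  #|[set i : 'I_(ne G) | ((ends G i).1 \in W) && ((ends G i).2 \in W)]|.

Definition valW (W : {set V}) : nat :=
  #|[set i : 'I_(ne G) | ((ends G i).1 \in W) != ((ends G i).2 \in W)]|.

Definition genusW (W : {set V}) : int :=
  (Posz (edgesW W) - Posz #|W| + 1 + Posz (\sum_(v in W) gv G v))%R.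

Definition AW (W : {set V}) : {set 'I_n} := [set j | mark G j \in W].

Definition biconnected (W : {set V}) : Prop :=
  [/\ W != set0, W != setT, induced_connected W & induced_connected (~: W)].

End Graphs.

(* The vine graph V(e,h,A) in type (g,n): vertex 0 = v1, vertex 1 = v2. *)
Definition vine (g n e h : nat) (A : {set 'I_n}) : sgraph n :=
  @SGraph n 2 e (fun _ => (@ord0 1, @ord_max 1))
    (fun v : 'I_2 => if v == ord0 then h else g + 1 - e - h)
    (fun j => if j \in A then @ord0 1 else @ord_max 1).

Definition inD (g n e h : nat) (A : {set 'I_n}) : Prop :=
  [/\ 1 <= e, e + h <= g + 1 & is_stable (vine g e h A) g].

(* Main.v *)
Require Import Defs.
From mathcomp Require Import all_boot all_order all_algebra.
From mathcomp Require Import zify.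

Lemma vine_stab (n g e h : nat) (A : {set 'I_n}) : inD g e h A ->
  [/\ 1 <= e, e + h <= g+1, 2 < 2*h + e + #|A| & 2 < 2*(g+1-e-h) + e + #|~:A|].
Proof.
case=> He Heh [_ _ Hs]; split => //.
- move: (Hs ord0); rewrite /valv /Av /=.
  have -> : \sum_(i < e) ((@ord0 1 == ord0) + (@ord_max 1 == ord0)) = e.
    by rewrite sum_nat_const card_ord muln1.
  have -> : [set j | (if j \in A then @ord0 1 else ord_max) == ord0] = A.
    by apply/setP => j; rewrite !inE; case: (j \in A).
  done.
- move: (Hs ord_max); rewrite /valv /Av /=.
  have -> : \sum_(i < e) ((@ord0 1 == ord_max) + (@ord_max 1 == ord_max)) = e.
    by rewrite sum_nat_const card_ord muln1.
  have -> : [set j | (if j \in A then @ord0 1 else ord_max) == ord_max] = ~: A.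
    by apply/setP => j; rewrite !inE; case: (j \in A).
  done.
Qed.

Lemma card_set_sum (T : finType) (P : pred T) : #|[set x | P x]| = \sum_x (P x : nat).
Proof. rewrite -sum1_card big_mkcond; apply: eq_bigr => x _; rewrite inE; by case: (P x). Qed.

Definition p0 : 'I_3 := @Ordinal 3 0 isT.
Definition p1 : 'I_3 := @Ordinal 3 1 isT.
Definition p2 : 'I_3 := @Ordinal 3 2 isT.

Lemma enum3 (v : 'I_3) : [\/ v = p0, v = p1 | v = p2].
Proof. case: v => [[|[|[|m]]] Hm]; [apply: Or31|apply: Or32|apply: Or33|by []]; by apply/eqP. Qed.

Lemma sum3 (F : 'I_3 -> nat) : \sum_(i < 3) F i = F p0 + F p1 + F p2.
Proof. rewrite !big_ord_recl big_ord0 addn0 addnA. have -> : lift ord0 (lift ord0 ord0) = p2 by apply/eqP. have -> : lift ord0 ord0 = p1 by apply/eqP. by have -> : ord0 = p0 by apply/eqP. Qed.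

Definition endf (k a1 i : nat) : 'I_3 * 'I_3 :=
  if i < k then (p0, p1) else if i < k + a1 then (p0, p2) else (p1, p2).

Lemma sum_endf k a1 a2 (Q : 'I_3 * 'I_3 -> nat) :
  \sum_(i < k + a1 + a2) Q (endf k a1 i) = k * Q (p0, p1) + a1 * Q (p0, p2) + a2 * Q (p1, p2).
Proof.
rewrite -(big_mkord xpredT (fun i => Q (endf k a1 i))).
rewrite (@big_cat_nat _ _ _ (k + a1)) ?leq_addr // (@big_cat_nat _ _ _ k 0 (k + a1)) ?leq_addr //.
rewrite (@eq_big_nat _ _ _ 0 k _ (fun=> Q (p0, p1))); last first.
  by move=> i /andP [_ Hi]; rewrite /endf Hi.
rewrite (@eq_big_nat _ _ _ k (k + a1) _ (fun=> Q (p0, p2))); last first.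
  by move=> i /andP [H1 H2]; rewrite /endf ltnNge H1 H2.
rewrite (@eq_big_nat _ _ _ (k + a1) (k + a1 + a2) _ (fun=> Q (p1, p2))); last first.
  move=> i /andP [H1 H2]; rewrite /endf ltnNge (leq_trans (leq_addr a1 k) H1) /=.
  by rewrite ltnNge H1.
by rewrite !sum_nat_const_nat subn0 !addKn !(mulnC _ (Q _)).
Qed.

Definition bgraph n g e h h' h'' k a1 a2 (A' A'' : {set 'I_n}) : sgraph n :=
  @SGraph n 3 (k + a1 + a2) (fun i => endf k a1 i)
    (fun v => if val v == 0 then h' else if val v == 1 then h'' else g + 1 - e - h)
    (fun j => if j \in A' then p0 else if j \in A'' then p1 else p2).

Lemma bconn n g e h h' h'' k a1 a2 (A' A'' : {set 'I_n}) (S : {set 'I_3}) :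
  0 < k -> 0 < a1 -> 0 < a2 -> induced_connected (G := bgraph n g e h h' h'' k a1 a2 A' A'') S.
Proof.
move=> Hk Ha1 Ha2 x y Hx Hy.
case: (eqVneq x y) => [->|Hxy]; first exact: connect0.
apply: connect1; rewrite /adjW Hx Hy /=.
have E01 : 0 < k + a1 + a2 by lia.
have E02 : k < k + a1 + a2 by lia.
have E12 : k + a1 < k + a1 + a2 by lia.
have F01 : endf k a1 0 = (p0, p1) by rewrite /endf Hk.
have F02 : endf k a1 k = (p0, p2).
  by rewrite /endf ltnn; have -> : k < k + a1 by lia.
have F12 : endf k a1 (k + a1) = (p1, p2).
  rewrite /endf; have -> : (k + a1 < k) = false by lia.
  by rewrite ltnn.
move: Hxy; case: (enum3 x) => ->; case: (enum3 y) => -> //= _; apply/existsP.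
- by exists (Ordinal E01); rewrite /= F01.
- by exists (Ordinal E02); rewrite /= F02.
- by exists (Ordinal E01); rewrite /= F01.
- by exists (Ordinal E12); rewrite /= F12.
- by exists (Ordinal E02); rewrite /= F02.
- by exists (Ordinal E12); rewrite /= F12.
Qed.

Lemma p01 : (p0 == p1) = false. Proof. by []. Qed.
Lemma p02 : (p0 == p2) = false. Proof. by []. Qed.
Lemma p10 : (p1 == p0) = false. Proof. by []. Qed.
Lemma p12 : (p1 == p2) = false. Proof. by []. Qed.
Lemma p20 : (p2 == p0) = false. Proof. by []. Qed.
Lemma p21 : (p2 == p1) = false. Proof. by []. Qed.
Definition peqE := (eqxx, p01, p02, p10, p12, p20, p21).

Lemma bwd n g e h e' h' e'' h'' (A A' A'' : {set 'I_n}) :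
 inD g e h A -> inD g e' h' A' -> inD g e'' h'' A'' ->
 A = A' :|: A'' -> [disjoint A' & A''] ->
 (2 * (Posz h + 1 - (Posz h' + Posz h'')) = Posz e' + Posz e'' - Posz e)%R ->
 [/\ e < e' + e'', e' < e + e'' & e'' < e + e'] ->
 exists G : sgraph n, is_stable G g /\
     exists W W' W'' : {set 'I_(nv G)},
       [/\ [/\ biconnected W, biconnected W' & biconnected W''],
           W = W' :|: W'' /\ [disjoint W' & W''],
           [/\ valW W = e, genusW W = Posz h & AW W = A],
           [/\ valW W' = e', genusW W' = Posz h' & AW W' = A'] &
           [/\ valW W'' = e'', genusW W'' = Posz h'' & AW W'' = A'']].
Proof.
case/vine_stab=> _ Heh Hs1 Hs2; case/vine_stab=> _ _ Hs1' _; case/vine_stab=> _ _ Hs1'' _.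
move=> HA Hdis Hg [T1 T2 T3].
have Hd : forall j, ~~ ((j \in A') && (j \in A'')).
  by move=> j; rewrite -in_setI (disjoint_setI0 Hdis) in_set0.
pose k := h + 1 - (h' + h''); pose a1 := e' - k; pose a2 := e'' - k.
have Hk : 0 < k by lia.
have Ha1 : 0 < a1 by lia.
have Ha2 : 0 < a2 by lia.
have Ee : e = a1 + a2 by lia.
have Ee' : e' = k + a1 by lia.
have Ee'' : e'' = k + a2 by lia.
have Eh : h + 1 = h' + h'' + k by lia.
pose G := bgraph n g e h h' h'' k a1 a2 A' A''.
have Av0 : Av (G := G) p0 = A'.
  by apply/setP => j; rewrite !inE /=; case: (j \in A'); case: (j \in A'').
have Av1 : Av (G := G) p1 = A''.
  by apply/setP => j; rewrite !inE /=; move: (Hd j); case: (j \in A'); case: (j \in A'').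
have Av2 : Av (G := G) p2 = ~: A.
  by apply/setP => j; rewrite HA !inE /=; case: (j \in A'); case: (j \in A'').
have valv_eq : forall v, valv (G := G) v = k * ((p0 == v) + (p1 == v)) + a1 * ((p0 == v) + (p2 == v))
     + a2 * ((p1 == v) + (p2 == v)).
  by move=> v; rewrite /valv /= (sum_endf k a1 a2 (fun pr => (pr.1 == v) + (pr.2 == v))).
have valW_eq : forall S, valW (G := G) S = k * ((p0 \in S) != (p1 \in S)) + a1 * ((p0 \in S) != (p2 \in S))
     + a2 * ((p1 \in S) != (p2 \in S)).
  by move=> S; rewrite /valW card_set_sum /= (sum_endf k a1 a2 (fun pr => ((pr.1 \in S) != (pr.2 \in S) : nat))).
have edgesW_eq : forall S, edgesW (G := G) S = k * ((p0 \in S) && (p1 \in S)) + a1 * ((p0 \in S) && (p2 \in S))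
     + a2 * ((p1 \in S) && (p2 \in S)).
  by move=> S; rewrite /edgesW card_set_sum /= (sum_endf k a1 a2 (fun pr => ((pr.1 \in S) && (pr.2 \in S) : nat))).
have card_eq : forall S : {set 'I_3}, #|S| = (p0 \in S) + (p1 \in S) + (p2 \in S).
  by move=> S; rewrite -sum1_card big_mkcond sum3 /=; case: (p0 \in S); case: (p1 \in S); case: (p2 \in S).
have gsum_eq : forall S : {set 'I_3}, \sum_(v in S) gv G v = (p0 \in S) * h' + (p1 \in S) * h'' + (p2 \in S) * (g + 1 - e - h).
  by move=> S; rewrite big_mkcond sum3 /=; case: (p0 \in S); case: (p1 \in S); case: (p2 \in S); rewrite /= ?mul1n ?mul0n.
exists G; split.
  split.
  - exact: bconn.
  - rewrite /= sum3 /=; lia.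
  - move=> v; case: (enum3 v) => ->; rewrite valv_eq !peqE /=.
    + rewrite Av0 /=; move: Hs1'; set c := #|A'|; lia.
    + rewrite Av1 /=; move: Hs1''; set c := #|A''|; lia.
    + rewrite Av2 /=; move: Hs2; set c := #|~: A|; lia.
exists [set p0; p1], [set p0], [set p1].
have bic : forall S : {set 'I_3}, S != set0 -> S != setT -> biconnected (G := G) S.
  by move=> S H1 H2; split => //; apply: bconn.
split.
- split; apply: bic.
  + by apply/set0Pn; exists p0; rewrite !inE.
  + by apply/eqP => E; move: (in_setT p2); rewrite -E !inE.
  + by apply/set0Pn; exists p0; rewrite !inE.
  + by apply/eqP => E; move: (in_setT p2); rewrite -E !inE.
  + by apply/set0Pn; exists p1; rewrite !inE.
  + by apply/eqP => E; move: (in_setT p2); rewrite -E !inE.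
- split; first by [].
  rewrite -setI_eq0; apply/eqP/setP => x; rewrite !inE; by case: (enum3 x) => ->.
- split.
  + rewrite valW_eq !inE !peqE /=; lia.
  + rewrite /genusW edgesW_eq card_eq gsum_eq !inE !peqE /=; lia.
  + apply/setP => j; rewrite HA !inE /=; by case: (j \in A'); case: (j \in A'').
- split.
  + rewrite valW_eq !inE !peqE /=; lia.
  + rewrite /genusW edgesW_eq card_eq gsum_eq !inE !peqE /=; lia.
  + apply/setP => j; rewrite !inE /=; by case: (j \in A'); case: (j \in A'').
- split.
  + rewrite valW_eq !inE !peqE /=; lia.
  + rewrite /genusW edgesW_eq card_eq gsum_eq !inE !peqE /=; lia.
  + apply/setP => j; rewrite !inE /=; move: (Hd j); by case: (j \in A'); case: (j \in A'').
Qed.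
Lemma edge_ids (a1 b1 a2 b2 : bool) : ~~ (a1 && b1) -> ~~ (a2 && b2) ->
 [/\ (((a1||b1) != (a2||b2)) : nat) = ((a1 && ~~(a2||b2)) || (~~(a1||b1) && a2)) + ((b1 && ~~(a2||b2)) || (~~(a1||b1) && b2)),
     ((a1 != a2):nat) = ((a1 && b2) || (b1 && a2)) + ((a1 && ~~(a2||b2)) || (~~(a1||b1) && a2)),
     ((b1 != b2):nat) = ((a1 && b2) || (b1 && a2)) + ((b1 && ~~(a2||b2)) || (~~(a1||b1) && b2)) &
     (((a1||b1) && (a2||b2)):nat) = (a1&&a2) + (b1&&b2) + ((a1 && b2) || (b1 && a2))].
Proof. by case: a1 b1 a2 b2 => [] [] [] []. Qed.

Lemma cross1 (a1 b1 a2 b2 : bool) : ~~ (a1 && b1) -> ~~ (a2 && b2) ->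
  a1 || b1 -> a2 || b2 -> a1 != a2 -> (a1 && b2) || (b1 && a2).
Proof. by case: a1 b1 a2 b2 => [] [] [] []. Qed.
Lemma cross2 (a1 b1 a2 b2 : bool) : ~~ a1 -> ~~ a2 -> b1 != b2 ->
  (b1 && ~~(a2||b2)) || (~~(a1||b1) && b2).
Proof. by case: a1 b1 a2 b2 => [] [] [] []. Qed.
Lemma cross3 (a1 b1 a2 b2 : bool) : ~~ b1 -> ~~ b2 -> a1 != a2 ->
  (a1 && ~~(a2||b2)) || (~~(a1||b1) && a2).
Proof. by case: a1 b1 a2 b2 => [] [] [] []. Qed.

Arguments edge_ids {a1 b1 a2 b2}.
Arguments cross1 {a1 b1 a2 b2}.
Arguments cross2 {a1 b1 a2 b2}.
Arguments cross3 {a1 b1 a2 b2}.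
Lemma sum_pos (I : finType) (F : I -> bool) i0 : F i0 -> 0 < \sum_i (F i : nat).
Proof. by move=> H; rewrite (bigD1 i0) //= H; apply: leq_addr. Qed.

Section Fwd.
Variable n : nat.
Variable G : sgraph n.

Lemma cross_edge (S X : {set V G}) u v : induced_connected S -> u \in S -> v \in S ->
  u \in X -> v \notin X -> exists i : 'I_(ne G),
   [&& (ends G i).1 \in S, (ends G i).2 \in S & ((ends G i).1 \in X) != ((ends G i).2 \in X)].
Proof.
move=> Hc Hu Hv HuX HvX; move/connectP: (Hc u v Hu Hv) => [p Hp Hl].
elim: p u Hu HuX Hp Hl => [|w p IH] u Hu HuX /=; first by move=> _ E; subst; rewrite HuX in HvX.
case/andP=> Hadj Hp Hl.
case/and3P: (Hadj) => _ Hw /existsP [i Hi].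
case HwX: (w \in X); first exact: (IH w Hw HwX Hp Hl).
exists i; case/orP: Hi => /eqP ->; by rewrite /= ?Hu ?Hw ?HuX ?HwX.
Qed.

Lemma fwd (W W' W'' : {set V G}) e h e' h' e'' h'' (A A' A'' : {set 'I_n}) :
  biconnected W -> biconnected W' -> biconnected W'' -> W = W' :|: W'' -> [disjoint W' & W''] ->
  [/\ valW W = e, genusW W = Posz h & AW W = A] ->
  [/\ valW W' = e', genusW W' = Posz h' & AW W' = A'] ->
  [/\ valW W'' = e'', genusW W'' = Posz h'' & AW W'' = A''] ->
  [/\ A = A' :|: A'' /\ [disjoint A' & A''],
      (2 * (Posz h + 1 - (Posz h' + Posz h'')) = Posz e' + Posz e'' - Posz e)%R &
      [/\ e < e' + e'', e' < e + e'' & e'' < e + e']].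
Proof.
move=> [W0 WT cW cWc] [W'0 W'T cW' cW'c] [W''0 W''T cW'' cW''c] HU Hdis [v1 g1 a1] [v2 g2 a2] [v3 g3 a3].
have HI := disjoint_setI0 Hdis.
have Hd : forall x, ~~ ((x \in W') && (x \in W'')).
  by move=> x; rewrite -in_setI HI in_set0.
pose x i := (ends G i).1; pose y i := (ends G i).2.
pose K := \sum_(i : 'I_(ne G)) (((x i \in W') && (y i \in W'')) || ((x i \in W'') && (y i \in W')) : nat).
pose C1 := \sum_(i : 'I_(ne G)) (((x i \in W') && ~~((y i \in W')||(y i \in W''))) || (~~((x i \in W')||(x i \in W'')) && (y i \in W')) : nat).
pose C2 := \sum_(i : 'I_(ne G)) (((x i \in W'') && ~~((y i \in W')||(y i \in W''))) || (~~((x i \in W')||(x i \in W'')) && (y i \in W'')) : nat).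
have eV : valW W = C1 + C2.
  rewrite /valW card_set_sum -big_split; apply: eq_bigr => i _.
  rewrite HU !inE; by case: (edge_ids (Hd (x i)) (Hd (y i))).
have eV' : valW W' = K + C1.
  rewrite /valW card_set_sum -big_split; apply: eq_bigr => i _.
  by case: (edge_ids (Hd (x i)) (Hd (y i))).
have eV'' : valW W'' = K + C2.
  rewrite /valW card_set_sum -big_split; apply: eq_bigr => i _.
  by case: (edge_ids (Hd (x i)) (Hd (y i))).
have eE : edgesW W = edgesW W' + edgesW W'' + K.
  rewrite /edgesW !card_set_sum -!big_split; apply: eq_bigr => i _.
  rewrite HU !inE; by case: (edge_ids (Hd (x i)) (Hd (y i))).
have eC : #|W| = #|W'| + #|W''| by rewrite HU cardsU HI cards0 subn0.
have eS : \sum_(v in W) gv G v = \sum_(v in W') gv G v + \sum_(v in W'') gv G v.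
  rewrite !(big_mkcond (fun v => v \in _)) -big_split; apply: eq_bigr => v _.
  rewrite HU inE /=; move: (Hd v); by case: (v \in W'); case: (v \in W''); rewrite ?addn0.
have Kpos : 0 < K.
  case/set0Pn: W'0 => u Hu; case/set0Pn: W''0 => v Hv.
  have HuW : u \in W by rewrite HU inE Hu.
  have HvW : v \in W by rewrite HU inE Hv orbT.
  have Hvn : v \notin W' by move: (Hd v); rewrite Hv andbT.
  case: (@cross_edge W W' u v cW HuW HvW Hu Hvn) => i /and3P [H1 H2 H3].
  apply: (@sum_pos _ _ i); apply: cross1 (Hd _) (Hd _) _ _ H3; [move: H1 | move: H2]; by rewrite HU inE.
have [w Hw] : exists w, w \notin W.
  case: (pickP (fun v => v \notin W)) => [v Hv|H]; first by exists v.
  case/eqP: WT; apply/setP => v; rewrite inE; move: (H v) => /= /negbFE //.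
have Hw' : w \notin W' by move: Hw; rewrite HU inE negb_or => /andP [].
have Hw'' : w \notin W'' by move: Hw; rewrite HU inE negb_or => /andP [].
have C2pos : 0 < C2.
  case/set0Pn: W''0 => u Hu.
  have Hu' : u \notin W' by move: (Hd u); rewrite Hu andbT.
  have Hu1 : u \in ~: W' by rewrite inE.
  have Hw1 : w \in ~: W' by rewrite inE.
  case: (@cross_edge (~: W') W'' u w cW'c Hu1 Hw1 Hu Hw'') => i /and3P [H1 H2 H3].
  apply: (@sum_pos _ _ i); apply: cross2 _ _ H3; by rewrite -in_setC.
have C1pos : 0 < C1.
  case/set0Pn: W'0 => u Hu.
  have Hu' : u \notin W'' by move: (Hd u); rewrite Hu.
  have Hu1 : u \in ~: W'' by rewrite inE.
  have Hw1 : w \in ~: W'' by rewrite inE.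
  case: (@cross_edge (~: W'') W' u w cW''c Hu1 Hw1 Hu Hw') => i /and3P [H1 H2 H3].
  apply: (@sum_pos _ _ i); apply: cross3 _ _ H3; by rewrite -in_setC.
have Ee : e = C1 + C2 by rewrite -v1.
have Ee' : e' = K + C1 by rewrite -v2.
have Ee'' : e'' = K + C2 by rewrite -v3.
split.
- split; first by rewrite -a1 -a2 -a3 HU; apply/setP => j; rewrite !inE.
  rewrite -setI_eq0 -a2 -a3; apply/eqP/setP => j; rewrite !inE; exact: negbTE (Hd _).
- move: g1 g2 g3; rewrite /genusW eE eC eS; lia.
- split; lia.
Qed.
End Fwd.

Theorem mainTheorem10 (g n : nat) (hgn : 2 < 2 * g + n)
  (e h e' h' e'' h'' : nat) (A A' A'' : {set 'I_n}) :
  inD g e h A -> inD g e' h' A' -> inD g e'' h'' A'' ->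
  (exists G : sgraph n, is_stable G g /\
     exists W W' W'' : {set 'I_(nv G)},
       [/\ [/\ biconnected W, biconnected W' & biconnected W''],
           W = W' :|: W'' /\ [disjoint W' & W''],
           [/\ valW W = e, genusW W = Posz h & AW W = A],
           [/\ valW W' = e', genusW W' = Posz h' & AW W' = A'] &
           [/\ valW W'' = e'', genusW W'' = Posz h'' & AW W'' = A'']])
  <->
  [/\ A = A' :|: A'' /\ [disjoint A' & A''],
      (2 * (Posz h + 1 - (Posz h' + Posz h'')) = Posz e' + Posz e'' - Posz e)%R &
      [/\ e < e' + e'', e' < e + e'' & e'' < e + e']].
Proof.
move=> H1 H2 H3; split.
- move=> [G [_ [W [W' [W'' [[b1 b2 b3] [HU Hdis] X1 X2 X3]]]]]].
  exact: (@fwd n G W W' W'' e h e' h' e'' h'' A A' A'' b1 b2 b3 HU Hdis X1 X2 X3).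
- move=> [[HA Hdis] Hg HT].
  exact: (@bwd n g e h e' h' e'' h'' A A' A'' H1 H2 H3 HA Hdis Hg HT).
Qed.
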